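(* Let $m>1$ be an integer and $k>1$ an odd integer. Then there exists a number $c$ such that for every integer base $b\ge c$, the number $[m\cdot(b-1)]^k$ is antipalindromic in base $b$. Moreover, one may take $c=\binom{k}{\frac{k-1}{2}}\cdot m^k$.
   Context: For an integer $b\ge 2$, every natural number $x$ has a unique base-$b$ expansion $x=a_\ell b^\ell+\dots+a_1b+a_0$ with $a_0,\dots,a_\ell\in\{0,1,\dots,b-1\}$ and $a_\ell\neq 0$. The number $x$ is antipalindromic in base $b$ if $a_j=b-1-a_{\ell-j}$ for all $j\in\{0,1,\dots,\ell\}$. *)

(* Defs.v *)
From mathcomp Require Import all_boot.
Set Implicit Arguments. Unset Strict Implicit. Unset Printing Implicit Defensive.

(* s is the base-b expansion of x: s = [:: a_0; a_1; ...; a_l] (least significant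
   digit first), all digits < b, leading digit a_l <> 0, x = \sum_j a_j b^j.
   For b >= 2 this expansion exists and is unique for x > 0. *)
Definition base_expansion (b x : nat) (s : seq nat) : Prop :=
  [/\ 0 < size s,
      all (fun a => a < b) s,
      nth 0 s (size s).-1 != 0
    & x = \sum_(j < size s) nth 0 s j * b ^ j].

Definition antipalindromic (b x : nat) : Prop :=
  exists s : seq nat, base_expansion b x s /\
    forall j : nat, j < size s ->
      nth 0 s j = b - 1 - nth 0 s ((size s).-1 - j).

(* Main.v *)
Require Import Defs.
From mathcomp Require Import all_boot.
From mathcomp Require Import all_order all_algebra zify ring.
Import GRing.Theory Num.Theory.

Lemma binmax n i : 'C(n,i) <= 'C(n, n./2).
Proof.
have hn := odd_double_half n.
have step : forall j, j.+1 <= n - j -> 'C(n,j) <= 'C(n,j.+1).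
  move=> j hj; rewrite -(@leq_pmul2l j.+1) // mul_bin_left.
  by rewrite leq_mul2r hj orbT.
have mono : forall d i, i + d <= n./2 -> 'C(n,i) <= 'C(n,i+d).
  elim=> [|d IH] i0 h; first by rewrite addn0.
  apply: leq_trans (IH i0 _) _; first lia.
  rewrite addnS; apply: step.
  move: h hn; rewrite -muln2; case: (odd n) => /=; lia.
case: (leqP i n./2) => hi.
  by have := mono (n./2 - i) i; rewrite subnKC //; apply.
case: (leqP i n) => hin; last by rewrite bin_small.
rewrite -bin_sub //; have := mono (n./2 - (n - i)) (n - i).
rewrite subnKC //; first by apply.
move: hi hn; rewrite -muln2; case: (odd n) => /=; lia.
Qed.

Local Open Scope ring_scope.
Lemma pair_sum (b : int) (c : nat -> int) n :
  \sum_(0 <= j < (n.*2).+2) (if odd j then c j - 1 else b - c j) * b^+j =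
  \sum_(0 <= j < (n.*2).+2) (if odd j then c j else - c j) * b^+j.
Proof.
elim: n => [|n IH].
  rewrite !big_nat_recr //= !big_nil /=; rewrite expr1; ring.
rewrite doubleS; do 2 rewrite [in LHS]big_nat_recr //; do 2 rewrite [in RHS]big_nat_recr //=.
rewrite IH odd_double /= !exprS; ring.
Qed.
Local Close Scope ring_scope.

Lemma main2 (m k : nat) (hm : 1 < m) (hk1 : 1 < k) (hkodd : odd k) b :
  2 <= b -> 'C(k, k.-1./2) * m ^ k <= b ->
     antipalindromic b ((m * (b - 1)) ^ k).
Proof.
move=> hb hc.
have hkn := odd_double_half k; rewrite hkodd /= in hkn.
have hk2 : k.-1./2 = k./2 by rewrite -{1}hkn add1n /= doubleK.
rewrite hk2 in hc.
pose c j := m ^ k * 'C(k, j).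
have cge1 : forall j, j <= k -> 0 < c j.
  by move=> j hj; rewrite muln_gt0 expn_gt0 bin_gt0 hj (ltnW hm).
have cleb : forall j, c j <= b.
  by move=> j; apply: leq_trans hc; rewrite /c mulnC leq_mul2r binmax orbT.
have csym : forall j, j <= k -> c (k - j) = c j by move=> j hj; rewrite /c bin_sub.
have cdef : forall j, c j = m ^ k * 'C(k, j) by [].
have ck : c k = m ^ k by rewrite /c binn muln1.
clearbody c.
pose f j := if odd j then c j - 1 else b - c j.
exists (mkseq f k.+1); split; last first.
  rewrite size_mkseq /= => j hj.
  rewrite !nth_mkseq ?ltnS ?leq_subr // /f oddB -1?ltnS // hkodd /=.
  have hj' : j <= k by rewrite -ltnS.
  rewrite csym //; have h1 := cleb j; have h2 := cge1 j hj'.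
  clear -h1 h2 hb; case: (odd j) => /=; lia.
split.
- by rewrite size_mkseq.
- apply/allP => a /mapP [j]; rewrite mem_iota => /andP[_ hj] ->.
  have hj' : j <= k by rewrite -ltnS.
  rewrite /f; have h1 := cleb j; have h2 := cge1 j hj'.
  clear -h1 h2 hb; case: (odd j) => /=; lia.
- rewrite size_mkseq nth_mkseq // /f hkodd ck -lt0n subn_gt0.
  apply: (leq_trans hm); rewrite -{1}(expn1 m); apply: leq_pexp2l; [exact: ltnW | exact: ltnW].
rewrite size_mkseq.
have -> : \sum_(j < k.+1) nth 0 (mkseq f k.+1) j * b ^ j = \sum_(0 <= j < k.+1) f j * b ^ j.
  by rewrite big_mkord; apply: eq_bigr => j _; rewrite nth_mkseq.
apply/eqP; rewrite -(eqr_nat int) natr_sum; apply/eqP.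
rewrite (@eq_big_nat _ _ _ _ _ _ (fun j => (if odd j then (c j)%:R - 1 else b%:R - (c j)%:R) * (b%:R ^+ j))%R); last first.
  move=> j /andP[_ hj]; have hj' : j <= k by rewrite -ltnS.
  have h1 := cleb j; have h2 := cge1 j hj'.
  rewrite /f natrM natrX; case: (odd j); rewrite natrB //.
have kE : k.+1 = (k./2).*2.+2 by rewrite -{1}hkn add1n.
rewrite kE pair_sum -kE natrX natrM natrB ?(ltnW hb) // exprMn addrC exprDn.
rewrite big_mkord mulr_sumr; apply: eq_bigr => [[i hi]] _ /=.
have hi' : i <= k by rewrite -ltnS.
rewrite cdef natrM natrX -signr_odd oddB // hkodd.
case: (odd i) => /=; rewrite ?expr0 ?expr1; rewrite -mulr_natr; ring.
Qed.

Theorem mainTheorem12 (m k : nat) (hm : 1 < m) (hk1 : 1 < k) (hkodd : odd k) :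
  (exists c : nat, forall b : nat, 2 <= b -> c <= b ->
     antipalindromic b ((m * (b - 1)) ^ k)) /\
  (forall b : nat, 2 <= b -> 'C(k, k.-1./2) * m ^ k <= b ->
     antipalindromic b ((m * (b - 1)) ^ k)).
Proof.
split; last exact: main2.
by exists ('C(k, k.-1./2) * m ^ k) => b; apply: main2.
Qed.
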